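(* Let $\gamma_a,\gamma_s>0$, $\lambda\ge0$, $q>0$, $\sigma_B>0$, $\varepsilon_a\in(0,2)$, and let $\beta_a,\beta_s:\mathbb R\to\mathbb R$ be globally Lipschitz continuous with $\beta_a\ge0$, $\beta_s>0$. For every $(T_a^{(0)},T_s^{(0)})\in[0,+\infty)^2$, the solution $(T_a(t),T_s(t))$ of \[ \begin{cases} \gamma_a T_a'=-\lambda(T_a-T_s)+\varepsilon_a\sigma_B|T_s|^3T_s-2\varepsilon_a\sigma_B|T_a|^3T_a+q\beta_a(T_a),\\ \gamma_s T_s'=-\lambda(T_s-T_a)-\sigma_B|T_s|^3T_s+\varepsilon_a\sigma_B|T_a|^3T_a+q\beta_s(T_s),\\ T_a(0)=T_a^{(0)},\quad T_s(0)=T_s^{(0)} \end{cases} \] converges as $t\to+\infty$ to some equilibrium point of the system. Moreover, there exists $T\ge0$ such that $t\mapsto T_a(t)$ and $t\mapsto T_s(t)$ are monotone on $[T,+\infty)$. *)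

(* Defs.v *)
From Stdlib Require Import Reals.
From Coquelicot Require Import Coquelicot.
Open Scope R_scope.

Definition lipschitz (f : R -> R) : Prop :=
  exists L : R, 0 <= L /\ forall x y : R, Rabs (f x - f y) <= L * Rabs (x - y).

(* right-hand sides of the system (multiplied by gamma_a resp. gamma_s) *)
Definition Fa (lam q sigB epsa : R) (ba : R -> R) (Ta Ts : R) : R :=
  - lam * (Ta - Ts) + epsa * sigB * (Rabs Ts ^ 3 * Ts)
  - 2 * epsa * sigB * (Rabs Ta ^ 3 * Ta) + q * ba Ta.

Definition Fs (lam q sigB epsa : R) (bs : R -> R) (Ta Ts : R) : R :=
  - lam * (Ts - Ta) - sigB * (Rabs Ts ^ 3 * Ts)
  + epsa * sigB * (Rabs Ta ^ 3 * Ta) + q * bs Ts.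

Definition is_equilibrium (lam q sigB epsa : R) (ba bs : R -> R) (a s : R) : Prop :=
  Fa lam q sigB epsa ba a s = 0 /\ Fs lam q sigB epsa bs a s = 0.

Definition monotone_from (T : R) (f : R -> R) : Prop :=
  (forall t1 t2, T <= t1 -> t1 <= t2 -> f t1 <= f t2) \/
  (forall t1 t2, T <= t1 -> t1 <= t2 -> f t2 <= f t1).

(* Main.v *)
Require Import Defs.
From Stdlib Require Import Reals Lra Psatz Classical.
From Coquelicot Require Import Coquelicot.
Open Scope R_scope.


Lemma deriv_eps (f : R -> R) t l : is_derive f t l ->
  forall eps, 0 < eps -> exists d, 0 < d /\ forall h, Rabs h < d ->
    Rabs (f (t + h) - f t - l * h) <= eps * Rabs h.
Proof.
  intros Hd eps He. apply is_derive_Reals in Hd.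
  destruct (Hd eps He) as [d Hd']. exists d. split; [apply cond_pos|].
  intros h Hh. destruct (Req_dec h 0) as [->|Hn].
  { rewrite Rplus_0_r, Rabs_R0. replace (f t - f t - l * 0) with 0 by ring.
    rewrite Rabs_R0; lra. }
  specialize (Hd' h Hn Hh).
  replace (f (t + h) - f t - l * h) with (((f (t + h) - f t) / h - l) * h) by (field; auto).
  rewrite Rabs_mult. apply Rmult_le_compat_r; [apply Rabs_pos|lra].
Qed.

Lemma deriv_cont (f : R -> R) t l : is_derive f t l ->
  forall eps, 0 < eps -> exists d, 0 < d /\ forall r, Rabs (r - t) < d ->
    Rabs (f r - f t) < eps.
Proof.
  intros Hd eps He. destruct (deriv_eps f t l Hd 1 ltac:(lra)) as [d [Hd0 Hd1]].
  exists (Rmin d (eps / (Rabs l + 1))). split.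
  { apply Rmin_glb_lt; auto. apply Rdiv_lt_0_compat; [lra|]. pose proof (Rabs_pos l); lra. }
  intros r Hr. specialize (Hd1 (r - t)). replace (t + (r - t)) with r in Hd1 by ring.
  assert (H1 : Rabs (r - t) < d) by (eapply Rlt_le_trans; [exact Hr| apply Rmin_l]).
  specialize (Hd1 H1).
  assert (H2 : Rabs (r - t) < eps / (Rabs l + 1)) by (eapply Rlt_le_trans; [exact Hr| apply Rmin_r]).
  pose proof (Rabs_pos l). pose proof (Rabs_pos (r - t)).
  assert (H3 : Rabs (r - t) * (Rabs l + 1) < eps).
  { apply (Rmult_lt_compat_r (Rabs l + 1)) in H2; [|lra].
    unfold Rdiv in H2. rewrite Rmult_assoc, Rinv_l in H2; lra. }
  assert (H4 : Rabs (f r - f t) <= Rabs (f r - f t - l * (r - t)) + Rabs (l * (r - t))).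
  { replace (f r - f t) with ((f r - f t - l * (r - t)) + l * (r - t)) at 1 by ring.
    apply Rabs_triang. }
  rewrite Rabs_mult in H4. nra.
Qed.

Lemma deriv_cont_pt (f : R -> R) t l : is_derive f t l -> continuity_pt f t.
Proof.
  intros Hd. apply derivable_continuous_pt. exists l. apply is_derive_Reals; exact Hd.
Qed.

Lemma left_gt (f : R -> R) t l : is_derive f t l -> l < 0 ->
  exists d, 0 < d /\ forall r, t - d < r < t -> f t < f r.
Proof.
  intros Hd Hl. destruct (deriv_eps f t l Hd (- l / 2) ltac:(lra)) as [d [Hd0 Hd1]].
  exists d; split; auto. intros r Hr. specialize (Hd1 (r - t)).
  replace (t + (r - t)) with r in Hd1 by ring.
  rewrite Rabs_left in Hd1 by lra. specialize (Hd1 ltac:(lra)).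
  apply Rabs_le_between in Hd1. nra.
Qed.

Lemma left_lt (f : R -> R) t l : is_derive f t l -> 0 < l ->
  exists d, 0 < d /\ forall r, t - d < r < t -> f r < f t.
Proof.
  intros Hd Hl. destruct (deriv_eps f t l Hd (l / 2) ltac:(lra)) as [d [Hd0 Hd1]].
  exists d; split; auto. intros r Hr. specialize (Hd1 (r - t)).
  replace (t + (r - t)) with r in Hd1 by ring.
  rewrite Rabs_left in Hd1 by lra. specialize (Hd1 ltac:(lra)).
  apply Rabs_le_between in Hd1. nra.
Qed.

Lemma mono_from_deriv (f df : R -> R) T :
  (forall t, T <= t -> is_derive f t (df t)) -> (forall t, T <= t -> 0 <= df t) ->
  forall t1 t2, T <= t1 -> t1 <= t2 -> f t1 <= f t2.
Proof.
  intros Hd Hp t1 t2 H1 H2.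
  destruct (MVT_gen f t1 t2 df) as [c [Hc Heq]].
  - intros x Hx. apply Hd. rewrite Rmin_left in Hx by lra. lra.
  - intros x Hx. rewrite Rmin_left in Hx by lra. eapply deriv_cont_pt, Hd. lra.
  - rewrite Rmin_left, Rmax_right in Hc by lra.
    assert (0 <= df c) by (apply Hp; lra). nra.
Qed.

Lemma bounded_incr_lim (f : R -> R) T B :
  (forall t1 t2, T <= t1 -> t1 <= t2 -> f t1 <= f t2) -> (forall t, T <= t -> f t <= B) ->
  exists l : R, is_lim f p_infty l /\ (forall t, T <= t -> f t <= l) /\ l <= B.
Proof.
  intros Hm Hb.
  destruct (completeness (fun y => exists t, T <= t /\ y = f t)) as [l [Hub Hlub]].
  - exists B. intros y [t [Ht ->]]. auto.
  - exists (f T). exists T. split; [lra|auto].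
  - exists l. split.
    + apply is_lim_spec. intros eps. simpl.
      destruct (classic (exists t, T <= t /\ l - eps < f t)) as [[t [Ht Hf]]|Hn].
      * exists t. intros x Hx. assert (f t <= f x) by (apply Hm; lra).
        assert (f x <= l) by (apply Hub; exists x; split; [lra|auto]).
        apply Rabs_def1; pose proof (cond_pos eps); lra.
      * exfalso. assert (l <= l - eps).
        { apply Hlub. intros y [t [Ht ->]]. apply Rnot_lt_le. intro. apply Hn. exists t; auto. }
        pose proof (cond_pos eps); lra.
    + split. intros t Ht. apply Hub. exists t; auto.
      apply Hlub. intros y [t [Ht ->]]. auto.
Qed.

Lemma lim_deriv_zero (f g : R -> R) (l c : R) :
  (forall t, 0 < t -> is_derive f t (g t)) -> is_lim f p_infty l ->
  (forall eps, 0 < eps -> exists M, forall t, M < t -> Rabs (g t - c) < eps) -> c = 0.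
Proof.
  intros Hd Hl Hg. apply is_lim_spec in Hl. unfold is_lim' in Hl.
  destruct (Req_dec c 0) as [|Hc]; auto. exfalso.
  assert (Hac : 0 < Rabs c) by (apply Rabs_pos_lt; auto).
  destruct (Hg (Rabs c / 2) ltac:(lra)) as [M1 HM1].
  destruct (Hl (mkposreal (Rabs c / 4) ltac:(lra))) as [M2 HM2]. simpl in HM2.
  set (t := Rmax 1 (Rmax M1 M2) + 1).
  assert (Ht1 : 1 < t) by (unfold t; pose proof (Rmax_l 1 (Rmax M1 M2)); lra).
  assert (HtM1 : M1 < t) by (unfold t; pose proof (Rmax_r 1 (Rmax M1 M2)); pose proof (Rmax_l M1 M2); lra).
  assert (HtM2 : M2 < t) by (unfold t; pose proof (Rmax_r 1 (Rmax M1 M2)); pose proof (Rmax_r M1 M2); lra).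
  destruct (MVT_gen f t (t + 1) g) as [x [Hx Heq]].
  - intros y Hy. rewrite Rmin_left in Hy by lra. apply Hd. lra.
  - intros y Hy. rewrite Rmin_left in Hy by lra. eapply deriv_cont_pt, Hd. lra.
  - rewrite Rmin_left, Rmax_right in Hx by lra.
    replace (t + 1 - t) with 1 in Heq by ring. rewrite Rmult_1_r in Heq.
    pose proof (HM2 t HtM2). pose proof (HM2 (t + 1) ltac:(lra)).
    pose proof (HM1 x ltac:(lra)).
    assert (Rabs (f (t + 1) - f t) < Rabs c / 2).
    { replace (f (t + 1) - f t) with ((f (t + 1) - l) - (f t - l)) by ring.
      eapply Rle_lt_trans; [apply Rabs_triang|]. rewrite Rabs_Ropp. lra. }
    rewrite Heq in H2.
    assert (Rabs c <= Rabs (g x - c) + Rabs (g x)).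
    { replace c with (- (g x - c) + g x) at 1 by ring.
      eapply Rle_trans; [apply Rabs_triang|]. rewrite Rabs_Ropp. lra. }
    lra.
Qed.
Definition pw (x : R) := Rabs x ^ 3 * x.

Lemma pw_pos x : 0 <= x -> pw x = x ^ 4.
Proof. intros; unfold pw; rewrite Rabs_pos_eq by lra; ring. Qed.
Lemma pw_neg x : x <= 0 -> pw x = - x ^ 4.
Proof. intros; unfold pw; rewrite Rabs_left1 by lra; ring. Qed.

Lemma pw_mono x y : y <= x -> pw y <= pw x.
Proof.
  intros H. destruct (Rle_dec 0 y).
  - rewrite !pw_pos by lra. 
    assert (0 <= x - y) by lra.
    assert (x^4 - y^4 = (x - y) * ((x+y)*(x*x+y*y))) by ring.
    assert (0 <= (x+y)*(x*x+y*y)) by nra. nra.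
  - destruct (Rle_dec 0 x).
    + rewrite (pw_pos x), (pw_neg y) by lra. assert (0 <= x^4) by (apply pow_le; lra).
      assert (0 <= y^4) by (replace (y^4) with ((y*y)*(y*y)) by ring; nra). lra.
    + rewrite !pw_neg by lra.
      assert (y^4 - x^4 = (x - y) * (-(x+y))*(x*x+y*y)) by ring.
      assert (0 <= (-(x+y))*(x*x+y*y)) by nra. nra.
Qed.

Lemma pw_lip x y R : Rabs x <= R -> Rabs y <= R -> y <= x -> pw x - pw y <= 4 * R ^ 3 * (x - y).
Proof.
  intros Hx Hy H. apply Rabs_le_between in Hx. apply Rabs_le_between in Hy.
  assert (HR : 0 <= R) by lra.
  assert (HR3 : 0 <= R^3) by (apply pow_le; lra).
  destruct (Rle_dec 0 y).
  - rewrite !pw_pos by lra.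
    replace (x^4 - y^4) with ((x - y) * ((x+y)*(x*x+y*y))) by ring.
    apply Rmult_le_compat_l with (r := x - y) in HR3; [|lra].
    assert ((x+y)*(x*x+y*y) <= 4 * R^3).
    { assert (x + y <= 2 * R) by lra. assert (x*x+y*y <= 2 * R*R) by nra.
      assert (0 <= x*x+y*y) by nra. simpl. nra. }
    assert (0 <= x - y) by lra. nra.
  - destruct (Rle_dec 0 x).
    + rewrite (pw_pos x), (pw_neg y) by lra.
      assert (x^4 <= R^3 * x).
      { simpl. assert (x*x <= R*R) by nra. assert (x*x*x <= R*R*R) by nra. nra. }
      assert (y^4 <= R^3 * (-y)).
      { simpl. assert (y*y <= R*R) by nra. assert (-(y*y*y) <= R*R*R) by nra. nra. }
      nra.
    + rewrite !pw_neg by lra.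
      replace (- x^4 - - y^4) with ((x - y) * (-(x+y))*(x*x+y*y)) by ring.
      assert (-(x+y) <= 2 * R) by lra. assert (x*x+y*y <= 2 * R*R) by nra.
      assert (0 <= x*x+y*y) by nra. assert (0 <= x - y) by lra. simpl. 
      assert (-(x+y)*(x*x+y*y) <= 4*(R*(R*(R*1)))) by nra. nra.
Qed.

Lemma pw_lip_abs x y R : Rabs x <= R -> Rabs y <= R -> Rabs (pw x - pw y) <= 4 * R ^ 3 * Rabs (x - y).
Proof.
  intros Hx Hy. destruct (Rle_dec y x).
  - pose proof (pw_mono x y r). pose proof (pw_lip x y R Hx Hy r).
    rewrite !Rabs_pos_eq by lra. auto.
  - pose proof (pw_mono y x ltac:(lra)). pose proof (pw_lip y x R Hy Hx ltac:(lra)).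
    rewrite !Rabs_left1 by lra. lra.
Qed.

Definition pp (x : R) := Rmax x 0.
Lemma pp_pos x : 0 <= x -> pp x = x.
Proof. intros; unfold pp; rewrite Rmax_left; lra. Qed.
Lemma pp_neg x : x <= 0 -> pp x = 0.
Proof. intros; unfold pp; rewrite Rmax_right; lra. Qed.
Lemma pp_ge0 x : 0 <= pp x.
Proof. unfold pp; apply Rmax_r. Qed.

Lemma pp2_bound x h : Rabs (pp (x + h) ^ 2 - pp x ^ 2 - 2 * pp x * h) <= 3 * (h * h).
Proof.
  destruct (Rle_dec 0 x); destruct (Rle_dec 0 (x + h)).
  - rewrite !pp_pos by lra. replace ((x + h) ^ 2 - x ^ 2 - 2 * x * h) with (h * h) by ring.
    rewrite Rabs_pos_eq; nra.
  - rewrite (pp_pos x), (pp_neg (x+h)) by lra. apply Rabs_le_between.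
    assert (0 <= x * (- h - x)) by (apply Rmult_le_pos; lra).
    assert (x * (- h) <= (-h) * (-h)) by (apply Rmult_le_compat_r; lra). split; nra.
  - rewrite (pp_neg x), (pp_pos (x+h)) by lra. apply Rabs_le_between.
    assert (0 <= (x + h) * (- x)) by (apply Rmult_le_pos; lra).
    assert ((x+h) * h <= h * h) by (apply Rmult_le_compat_r; lra). split; nra.
  - rewrite !pp_neg by lra. replace (0 ^ 2 - 0 ^ 2 - 2 * 0 * h) with 0 by ring.
    rewrite Rabs_R0; nra.
Qed.

Lemma pp2_derive x : is_derive (fun y => pp y ^ 2) x (2 * pp x).
Proof.
  apply is_derive_Reals. intros eps He.
  exists (mkposreal (eps / 4) ltac:(lra)). intros h Hh Hlt. simpl in Hlt.
  pose proof (pp2_bound x h) as B.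
  replace ((pp (x + h) ^ 2 - pp x ^ 2) / h - 2 * pp x) with
    ((pp (x + h) ^ 2 - pp x ^ 2 - 2 * pp x * h) / h) by (field; auto).
  unfold Rdiv. rewrite Rabs_mult, Rabs_inv.
  assert (Hp : 0 < Rabs h) by (apply Rabs_pos_lt; auto).
  apply (Rmult_lt_reg_r (Rabs h)); auto. rewrite Rmult_assoc, Rinv_l by lra.
  rewrite Rmult_1_r. eapply Rle_lt_trans; [exact B|].
  assert (Rabs h * Rabs h = h * h) by (rewrite <- Rabs_mult; apply Rabs_pos_eq; nra).
  nra.
Qed.

Lemma dplus (f g : R -> R) x a b : is_derive f x a -> is_derive g x b ->
  is_derive (fun t => f t + g t) x (a + b).
Proof. intros; apply (is_derive_plus f g x a b); auto. Qed.
Lemma dminus (f g : R -> R) x a b : is_derive f x a -> is_derive g x b ->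
  is_derive (fun t => f t - g t) x (a - b).
Proof. intros; apply (is_derive_minus f g x a b); auto. Qed.
Lemma dmult (f g : R -> R) x a b : is_derive f x a -> is_derive g x b ->
  is_derive (fun t => f t * g t) x (a * g x + f x * b).
Proof. intros; apply (is_derive_mult f g x a b); auto. intros; apply Rmult_comm. Qed.
Lemma dcomp (f g : R -> R) x a b : is_derive f (g x) a -> is_derive g x b ->
  is_derive (fun t => f (g t)) x (b * a).
Proof. intros; apply (is_derive_comp f g x a b); auto. Qed.
Lemma dexpl C x : is_derive (fun t => exp (C * t)) x (C * exp (C * x)).
Proof.
  apply (dcomp exp (fun t => C * t) x (exp (C * x)) C). apply is_derive_exp.
  assert (H := is_derive_scal (fun t => t) x C 1 (is_derive_id (K := R_AbsRing) x)).
  rewrite Rmult_1_r in H. exact H.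
Qed.
Lemma dpp2 (f : R -> R) x a : is_derive f x a ->
  is_derive (fun t => pp (f t) ^ 2) x (a * (2 * pp (f x))).
Proof. intros. apply (dcomp (fun y => pp y ^ 2) f x). apply pp2_derive. auto. Qed.

Lemma compare (da ds Da Ds : R -> R) K t0 : 0 <= K ->
  (forall t, t0 <= t -> is_derive da t (Da t)) -> (forall t, t0 <= t -> is_derive ds t (Ds t)) ->
  (forall t, t0 <= t -> 0 < da t -> Da t <= K * (da t + pp (ds t))) ->
  (forall t, t0 <= t -> 0 < ds t -> Ds t <= K * (ds t + pp (da t))) ->
  forall t, t0 <= t -> pp (da t) ^ 2 + pp (ds t) ^ 2 <=
    exp (4 * K * (t - t0)) * (pp (da t0) ^ 2 + pp (ds t0) ^ 2).
Proof.
  intros HK Hda Hds Ha Hs.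
  set (V := fun t => pp (da t) ^ 2 + pp (ds t) ^ 2).
  set (dV := fun t => Da t * (2 * pp (da t)) + Ds t * (2 * pp (ds t))).
  assert (HV : forall t, t0 <= t -> is_derive V t (dV t)).
  { intros t Ht. apply dplus; apply dpp2; auto. }
  assert (HdV : forall t, t0 <= t -> dV t <= 4 * K * V t).
  { intros t Ht. unfold dV, V.
    assert (A1 : pp (da t) * Da t <= K * (pp (da t) * (pp (da t) + pp (ds t)))).
    { destruct (Rle_dec (da t) 0).
      - rewrite (pp_neg (da t)) by lra. nra.
      - rewrite (pp_pos (da t)) by lra. specialize (Ha t Ht ltac:(lra)). nra. }
    assert (A2 : pp (ds t) * Ds t <= K * (pp (ds t) * (pp (ds t) + pp (da t)))).
    { destruct (Rle_dec (ds t) 0).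
      - rewrite (pp_neg (ds t)) by lra. nra.
      - rewrite (pp_pos (ds t)) by lra. specialize (Hs t Ht ltac:(lra)). nra. }
    pose proof (pp_ge0 (da t)). pose proof (pp_ge0 (ds t)).
    assert (X : 2 * (pp (da t) * pp (ds t)) <= pp (da t) ^ 2 + pp (ds t) ^ 2) by (pose proof (pow2_ge_0 (pp (da t) - pp (ds t))); nra).
    apply (Rmult_le_compat_l K) in X; auto.
    set (a := pp (da t)) in *. set (b := pp (ds t)) in *.
    assert (a ^ 2 = a * a) by ring. assert (b ^ 2 = b * b) by ring.
    nra. }
  set (C := 4 * K).
  set (W := fun t => - (exp (- C * t) * V t)).
  assert (HW : forall t, t0 <= t -> is_derive W t (- (- C * exp (- C * t) * V t + exp (- C * t) * dV t))).
  { intros t Ht. unfold W. apply (is_derive_opp (K := R_AbsRing) (V := R_NormedModule)).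
    apply (dmult (fun s => exp (- C * s)) V). apply dexpl. auto. }
  assert (Hmon := mono_from_deriv W _ t0 HW).
  intros t Ht.
  assert (Hle : W t0 <= W t).
  { apply Hmon; [|lra|lra]. intros s Hs0. specialize (HdV s Hs0).
    pose proof (exp_pos (- C * s)). unfold C in *. nra. }
  unfold W in Hle.
  assert (exp (- C * t) * V t <= exp (- C * t0) * V t0) by lra.
  assert (E : exp (C * (t - t0)) = exp (C * t) * exp (- C * t0)).
  { rewrite <- exp_plus. f_equal. ring. }
  rewrite E. fold (V t) (V t0).
  assert (E2 : V t = exp (C * t) * (exp (- C * t) * V t)).
  { rewrite <- Rmult_assoc, <- exp_plus. replace (C * t + - C * t) with 0 by ring.
    rewrite exp_0; ring. }
  rewrite E2. rewrite Rmult_assoc. apply Rmult_le_compat_l; [apply Rlt_le, exp_pos|]. auto.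
Qed.

Lemma cont_lt (f : R -> R) t l c : is_derive f t l -> f t < c ->
  exists d, 0 < d /\ forall r, Rabs (r - t) < d -> f r < c.
Proof.
  intros Hd Hc. destruct (deriv_cont f t l Hd (c - f t) ltac:(lra)) as [d [Hd0 Hd1]].
  exists d; split; auto. intros r Hr. specialize (Hd1 r Hr). apply Rabs_def2 in Hd1. lra.
Qed.
Lemma cont_gt (f : R -> R) t l c : is_derive f t l -> c < f t ->
  exists d, 0 < d /\ forall r, Rabs (r - t) < d -> c < f r.
Proof.
  intros Hd Hc. destruct (deriv_cont f t l Hd (f t - c) ltac:(lra)) as [d [Hd0 Hd1]].
  exists d; split; auto. intros r Hr. specialize (Hd1 r Hr). apply Rabs_def2 in Hd1. lra.
Qed.

Lemma right_cont (f : R -> R) c : filterlim f (at_right 0) (locally (f 0)) -> f 0 < c ->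
  exists d, 0 < d /\ forall r, 0 <= r < d -> f r < c.
Proof.
  intros H Hc. rewrite filterlim_locally in H. specialize (H (mkposreal (c - f 0) ltac:(lra))).
  destruct H as [d Hd]. unfold ball in Hd; simpl in Hd.
  unfold AbsRing_ball, abs, minus, plus, opp in Hd; simpl in Hd.
  exists d; split; [apply cond_pos|]. intros r Hr.
  destruct (Req_dec r 0) as [->|Hn]; [lra|].
  assert (Rabs (r + - 0) < d) by (rewrite Rabs_pos_eq; lra).
  specialize (Hd r H ltac:(lra)). apply Rabs_def2 in Hd. lra.
Qed.
Lemma right_cont' (f : R -> R) c : filterlim f (at_right 0) (locally (f 0)) -> c < f 0 ->
  exists d, 0 < d /\ forall r, 0 <= r < d -> c < f r.
Proof.
  intros H Hc. rewrite filterlim_locally in H. specialize (H (mkposreal (f 0 - c) ltac:(lra))).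
  destruct H as [d Hd]. unfold ball in Hd; simpl in Hd.
  unfold AbsRing_ball, abs, minus, plus, opp in Hd; simpl in Hd.
  exists d; split; [apply cond_pos|]. intros r Hr.
  destruct (Req_dec r 0) as [->|Hn]; [lra|].
  assert (Rabs (r + - 0) < d) by (rewrite Rabs_pos_eq; lra).
  specialize (Hd r H ltac:(lra)). apply Rabs_def2 in Hd. lra.
Qed.

Lemma barrier (xa xs : R -> R) (Ga Gs : R -> R -> R) ga gs ma Ma ms Ms :
  0 < ga -> 0 < gs ->
  (forall t, 0 < t -> is_derive xa t (Ga (xa t) (xs t) / ga)) ->
  (forall t, 0 < t -> is_derive xs t (Gs (xa t) (xs t) / gs)) ->
  filterlim xa (at_right 0) (locally (xa 0)) ->
  filterlim xs (at_right 0) (locally (xs 0)) ->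
  ma < xa 0 < Ma -> ms < xs 0 < Ms ->
  (forall s, ms <= s <= Ms -> Ga Ma s < 0) -> (forall s, ms <= s <= Ms -> 0 < Ga ma s) ->
  (forall a, ma <= a <= Ma -> Gs a Ms < 0) -> (forall a, ma <= a <= Ma -> 0 < Gs a ms) ->
  forall t, 0 <= t -> ma < xa t < Ma /\ ms < xs t < Ms.
Proof.
  intros Hga Hgs Hda Hds Hca Hcs H0a H0s F1 F2 F3 F4.
  set (P := fun t => ma < xa t < Ma /\ ms < xs t < Ms).
  change (forall t, 0 <= t -> P t).
  apply NNPP. intro Hn. apply not_all_ex_not in Hn. destruct Hn as [t1 Ht1].
  apply imply_to_and in Ht1. destruct Ht1 as [Ht1 Hnp].
  set (E := fun t => 0 <= t /\ forall r, 0 <= r <= t -> P r).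
  assert (Eub : forall t, E t -> t < t1).
  { intros t [Ht Hr]. apply Rnot_le_lt. intro. apply Hnp, Hr. lra. }
  destruct (completeness E) as [ts [Hub Hlub]].
  { exists t1. intros t Ht. apply Rlt_le, Eub, Ht. }
  { exists 0. split; [lra|]. intros r Hr. replace r with 0 by lra. unfold P; lra. }
  assert (Fb : forall r, 0 <= r < ts -> P r).
  { intros r Hr. apply NNPP. intro HnP.
    assert (ts <= r); [|lra]. apply Hlub. intros t [Ht Hrt].
    apply Rnot_lt_le. intro. apply HnP, Hrt. lra. }
  assert (Hts : 0 < ts).
  { destruct (right_cont xa Ma Hca ltac:(lra)) as [d1 [Hd1 Hd1']].
    destruct (right_cont' xa ma Hca ltac:(lra)) as [d2 [Hd2 Hd2']].
    destruct (right_cont xs Ms Hcs ltac:(lra)) as [d3 [Hd3 Hd3']].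
    destruct (right_cont' xs ms Hcs ltac:(lra)) as [d4 [Hd4 Hd4']].
    set (d := Rmin (Rmin d1 d2) (Rmin d3 d4)).
    assert (0 < d) by (unfold d; repeat apply Rmin_glb_lt; auto).
    assert (d <= d1 /\ d <= d2 /\ d <= d3 /\ d <= d4).
    { unfold d. pose proof (Rmin_l (Rmin d1 d2) (Rmin d3 d4)).
      pose proof (Rmin_r (Rmin d1 d2) (Rmin d3 d4)).
      pose proof (Rmin_l d1 d2). pose proof (Rmin_r d1 d2).
      pose proof (Rmin_l d3 d4). pose proof (Rmin_r d3 d4). lra. }
    assert (E (d / 2)).
    { split; [lra|]. intros r Hr. unfold P.
      repeat split; [apply Hd2'|apply Hd1'|apply Hd4'|apply Hd3']; lra. }
    specialize (Hub _ H1). lra. }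
  assert (Hder_a := Hda ts Hts). assert (Hder_s := Hds ts Hts).
  assert (Hpick : forall d, 0 < d -> exists r, 0 <= r < ts /\ ts - d < r).
  { intros d Hd. exists (ts - Rmin d ts / 2). pose proof (Rmin_l d ts). pose proof (Rmin_r d ts).
    assert (0 < Rmin d ts) by (apply Rmin_glb_lt; auto). lra. }
  assert (Cl1 : xa ts <= Ma).
  { apply Rnot_lt_le. intro Hc. destruct (cont_gt xa ts _ Ma Hder_a Hc) as [d [Hd Hd']].
    destruct (Hpick d Hd) as [r [Hr1 Hr2]]. specialize (Hd' r ltac:(rewrite Rabs_left; lra)).
    destruct (Fb r Hr1); lra. }
  assert (Cl2 : ma <= xa ts).
  { apply Rnot_lt_le. intro Hc. destruct (cont_lt xa ts _ ma Hder_a Hc) as [d [Hd Hd']].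
    destruct (Hpick d Hd) as [r [Hr1 Hr2]]. specialize (Hd' r ltac:(rewrite Rabs_left; lra)).
    destruct (Fb r Hr1); lra. }
  assert (Cl3 : xs ts <= Ms).
  { apply Rnot_lt_le. intro Hc. destruct (cont_gt xs ts _ Ms Hder_s Hc) as [d [Hd Hd']].
    destruct (Hpick d Hd) as [r [Hr1 Hr2]]. specialize (Hd' r ltac:(rewrite Rabs_left; lra)).
    destruct (Fb r Hr1); lra. }
  assert (Cl4 : ms <= xs ts).
  { apply Rnot_lt_le. intro Hc. destruct (cont_lt xs ts _ ms Hder_s Hc) as [d [Hd Hd']].
    destruct (Hpick d Hd) as [r [Hr1 Hr2]]. specialize (Hd' r ltac:(rewrite Rabs_left; lra)).
    destruct (Fb r Hr1); lra. }
  assert (HnPts : ~ P ts).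
  { intros [[Ha1 Ha2] [Hs1 Hs2]].
    destruct (cont_lt xa ts _ Ma Hder_a Ha2) as [d1 [Hd1 Hd1']].
    destruct (cont_gt xa ts _ ma Hder_a Ha1) as [d2 [Hd2 Hd2']].
    destruct (cont_lt xs ts _ Ms Hder_s Hs2) as [d3 [Hd3 Hd3']].
    destruct (cont_gt xs ts _ ms Hder_s Hs1) as [d4 [Hd4 Hd4']].
    set (d := Rmin (Rmin d1 d2) (Rmin d3 d4)).
    assert (0 < d) by (unfold d; repeat apply Rmin_glb_lt; auto).
    assert (d <= d1 /\ d <= d2 /\ d <= d3 /\ d <= d4).
    { unfold d. pose proof (Rmin_l (Rmin d1 d2) (Rmin d3 d4)).
      pose proof (Rmin_r (Rmin d1 d2) (Rmin d3 d4)).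
      pose proof (Rmin_l d1 d2). pose proof (Rmin_r d1 d2).
      pose proof (Rmin_l d3 d4). pose proof (Rmin_r d3 d4). lra. }
    assert (E (ts + d / 2)).
    { split; [lra|]. intros r Hr. destruct (Rlt_dec r ts); [apply Fb; lra|].
      assert (Rabs (r - ts) < d) by (rewrite Rabs_pos_eq; lra).
      unfold P. repeat split; [apply Hd2'|apply Hd1'|apply Hd4'|apply Hd3']; lra. }
    specialize (Hub _ H1). lra. }
  assert (Hpick' : forall d, 0 < d -> exists r, 0 <= r < ts /\ ts - d < r) by exact Hpick.
  unfold P in HnPts.
  destruct (Req_dec (xa ts) Ma) as [Ea|Na].
  { assert (Hl : Ga (xa ts) (xs ts) / ga < 0).
    { rewrite Ea. apply Rdiv_neg_pos; auto; apply F1; lra. }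
    destruct (left_gt xa ts _ Hder_a Hl) as [d [Hd Hd']].
    destruct (Hpick d Hd) as [r [Hr1 Hr2]]. specialize (Hd' r ltac:(lra)).
    destruct (Fb r Hr1); lra. }
  destruct (Req_dec (xa ts) ma) as [Ea|Na'].
  { assert (Hl : 0 < Ga (xa ts) (xs ts) / ga).
    { rewrite Ea. apply Rdiv_lt_0_compat; auto; apply F2; lra. }
    destruct (left_lt xa ts _ Hder_a Hl) as [d [Hd Hd']].
    destruct (Hpick d Hd) as [r [Hr1 Hr2]]. specialize (Hd' r ltac:(lra)).
    destruct (Fb r Hr1); lra. }
  destruct (Req_dec (xs ts) Ms) as [Es|Ns].
  { assert (Hl : Gs (xa ts) (xs ts) / gs < 0).
    { rewrite Es. apply Rdiv_neg_pos; auto; apply F3; lra. }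
    destruct (left_gt xs ts _ Hder_s Hl) as [d [Hd Hd']].
    destruct (Hpick d Hd) as [r [Hr1 Hr2]]. specialize (Hd' r ltac:(lra)).
    destruct (Fb r Hr1); lra. }
  destruct (Req_dec (xs ts) ms) as [Es|Ns'].
  { assert (Hl : 0 < Gs (xa ts) (xs ts) / gs).
    { rewrite Es. apply Rdiv_lt_0_compat; auto; apply F4; lra. }
    destruct (left_lt xs ts _ Hder_s Hl) as [d [Hd Hd']].
    destruct (Hpick d Hd) as [r [Hr1 Hr2]]. specialize (Hd' r ltac:(lra)).
    destruct (Fb r Hr1); lra. }
  apply HnPts. lra.
Qed.

Lemma Fa_eq lam q sigB epsa ba a s : Fa lam q sigB epsa ba a s =
  - lam * (a - s) + epsa * sigB * pw s - 2 * epsa * sigB * pw a + q * ba a.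
Proof. reflexivity. Qed.
Lemma Fs_eq lam q sigB epsa bs a s : Fs lam q sigB epsa bs a s =
  - lam * (s - a) - sigB * pw s + epsa * sigB * pw a + q * bs s.
Proof. reflexivity. Qed.

Lemma lip_le (f : R -> R) L x y : (forall x y, Rabs (f x - f y) <= L * Rabs (x - y)) ->
  f x <= f y + L * Rabs (x - y).
Proof. intros H. specialize (H x y). pose proof (Rle_abs (f x - f y)). lra. Qed.

Lemma corners lam q sigB epsa (ba bs : R -> R) Ta0 Ts0 L1 L2 :
  0 <= lam -> 0 < q -> 0 < sigB -> 0 < epsa -> epsa < 2 -> 0 <= L1 -> 0 <= L2 ->
  (forall x y, Rabs (ba x - ba y) <= L1 * Rabs (x - y)) ->
  (forall x y, Rabs (bs x - bs y) <= L2 * Rabs (x - y)) ->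
  (forall x, 0 <= ba x) -> (forall x, 0 < bs x) -> 0 <= Ta0 -> 0 <= Ts0 ->
  exists A k, 0 < A /\ 0 < k /\ Ta0 < A /\ Ts0 < k * A /\
    Fa lam q sigB epsa ba A (k * A) < 0 /\ Fs lam q sigB epsa bs A (k * A) < 0 /\
    0 < Fa lam q sigB epsa ba (- A) (- (k * A)) /\ 0 < Fs lam q sigB epsa bs (- A) (- (k * A)).
Proof.
  intros hl hq hs he0 he2 hL1 hL2 Hba Hbs hba hbs h0 h0'.
  set (c := (epsa + 2) / 2). set (d0 := (2 - epsa) / 2).
  assert (Hc : 0 < c) by (unfold c; lra). assert (Hd0 : 0 < d0) by (unfold d0; lra).
  set (k := sqrt (sqrt c)).
  assert (Hk : 0 < k) by (unfold k; apply sqrt_lt_R0, sqrt_lt_R0; auto).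
  assert (Hk4 : k ^ 4 = c).
  { unfold k. replace (sqrt (sqrt c) ^ 4) with ((sqrt (sqrt c) * sqrt (sqrt c)) * (sqrt (sqrt c) * sqrt (sqrt c))) by ring.
    rewrite sqrt_sqrt by (apply Rlt_le, sqrt_lt_R0; auto). apply sqrt_sqrt; lra. }
  set (u := Rabs (1 - k)).
  assert (Hu1 : k - 1 <= u) by (unfold u; rewrite <- Rabs_Ropp; replace (- (1 - k)) with (k - 1) by ring; apply Rle_abs).
  assert (Hu2 : 1 - k <= u) by (unfold u; apply Rle_abs).
  assert (Hu0 : 0 <= u) by (unfold u; apply Rabs_pos).
  set (m := Rmin epsa 1 * sigB * d0).
  assert (Hm0 : 0 < Rmin epsa 1) by (apply Rmin_glb_lt; lra).
  assert (Hm : 0 < m) by (unfold m; apply Rmult_lt_0_compat; [apply Rmult_lt_0_compat|]; lra).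
  assert (Hm1 : m <= epsa * sigB * d0).
  { unfold m. apply Rmult_le_compat_r; [lra|]. apply Rmult_le_compat_r; [lra|]. apply Rmin_l. }
  assert (Hm2 : m <= sigB * d0).
  { unfold m. rewrite Rmult_assoc. rewrite <- (Rmult_1_l (sigB * d0)) at 2.
    apply Rmult_le_compat_r; [nra|]. apply Rmin_r. }
  set (Bc := lam * u + q * L1 + q * L2 * k + q * ba 0 + q * bs 0 + 1).
  assert (HB : 1 <= Bc) by (unfold Bc; pose proof (hba 0); pose proof (hbs 0); assert (0 <= q * L2 * k) by (apply Rmult_le_pos; nra); nra).
  set (A := Rmax (Rmax 1 (Ta0 + 1)) (Rmax ((Ts0 + 1) / k) (Bc / m))).
  assert (HA1 : 1 <= A) by (unfold A; eapply Rle_trans; [apply Rmax_l|apply Rmax_l]).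
  assert (HA2 : Ta0 + 1 <= A) by (unfold A; eapply Rle_trans; [apply Rmax_r|apply Rmax_l]).
  assert (HA3 : (Ts0 + 1) / k <= A) by (unfold A; eapply Rle_trans; [apply Rmax_l|apply Rmax_r]).
  assert (HA4 : Bc / m <= A) by (unfold A; eapply Rle_trans; [apply Rmax_r|apply Rmax_r]).
  assert (HmA : Bc <= m * A).
  { apply (Rmult_le_compat_l m) in HA4; [|lra]. unfold Rdiv in HA4.
    rewrite <- Rmult_assoc, (Rmult_comm m Bc), Rmult_assoc, Rinv_r in HA4; lra. }
  assert (HkA : Ts0 + 1 <= k * A).
  { apply (Rmult_le_compat_l k) in HA3; [|lra]. unfold Rdiv in HA3.
    rewrite <- Rmult_assoc, (Rmult_comm k), Rmult_assoc, Rinv_r in HA3; lra. }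
  set (X := A ^ 4).
  assert (HX : Bc * A <= m * X).
  { unfold X. assert (1 <= A ^ 3).
    { replace (A ^ 3) with (A * (A * A)) by ring. assert (1 <= A * A) by nra. nra. }
    replace (m * A ^ 4) with ((m * A) * A ^ 3) by ring.
    assert (Bc * A <= Bc * A ^ 3).
    { apply Rmult_le_compat_l; [lra|]. replace (A ^ 3) with (A * (A * A)) by ring.
      assert (1 <= A * A) by nra. nra. }
    assert (Bc * A ^ 3 <= (m * A) * A ^ 3) by (apply Rmult_le_compat_r; lra). lra. }
  assert (HXe : m * X <= epsa * sigB * d0 * X) by (apply Rmult_le_compat_r; [unfold X; apply pow_le|]; lra).
  assert (HXs : m * X <= sigB * d0 * X) by (apply Rmult_le_compat_r; [unfold X; apply pow_le|]; lra).
  assert (PA : pw A = X) by (unfold X; apply pw_pos; lra).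
  assert (PkA : pw (k * A) = c * X) by (rewrite pw_pos by nra; unfold X; rewrite <- Hk4; ring).
  assert (PmA : pw (- A) = - X) by (rewrite pw_neg by lra; unfold X; ring).
  assert (PmkA : pw (- (k * A)) = - (c * X)) by (rewrite pw_neg by nra; unfold X; rewrite <- Hk4; ring).
  assert (Hc2 : 2 - c = d0) by (unfold c, d0; field).
  assert (Hce : c - epsa = d0) by (unfold c, d0; field).
  assert (bA : ba A <= ba 0 + L1 * A).
  { assert (HH := lip_le ba L1 A 0 Hba). rewrite Rminus_0_r, Rabs_pos_eq in HH; lra. }
  assert (bsA : bs (k * A) <= bs 0 + L2 * (k * A)).
  { assert (HH := lip_le bs L2 (k * A) 0 Hbs). rewrite Rminus_0_r, Rabs_pos_eq in HH; nra. }
  pose proof (hba 0). pose proof (hbs 0). pose proof (hba (- A)). pose proof (hbs (- A)).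
  assert (Hlu : lam * ((k - 1) * A) <= lam * u * A) by (rewrite <- Rmult_assoc; apply Rmult_le_compat_r; nra).
  assert (Hlu' : lam * ((1 - k) * A) <= lam * u * A) by (rewrite <- Rmult_assoc; apply Rmult_le_compat_r; nra).
  assert (HqA : q * ba 0 <= q * ba 0 * A) by (assert (0 <= q * ba 0) by (apply Rmult_le_pos; lra); nra).
  assert (HqA' : q * bs 0 <= q * bs 0 * A) by (assert (0 <= q * bs 0) by (apply Rmult_le_pos; lra); nra).
  assert (Bexp : Bc * A = lam * u * A + q * L1 * A + q * L2 * (k * A) + q * ba 0 * A + q * bs 0 * A + A) by (unfold Bc; ring).
  assert (HqL2 : 0 <= q * L2 * (k * A)) by (apply Rmult_le_pos; [apply Rmult_le_pos|]; nra).
  assert (HqL1 : 0 <= q * L1 * A) by (apply Rmult_le_pos; [apply Rmult_le_pos|]; lra).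
  assert (Hqb0 : 0 <= q * ba 0 * A) by (apply Rmult_le_pos; [apply Rmult_le_pos|]; lra).
  assert (Hqs0 : 0 <= q * bs 0 * A) by (apply Rmult_le_pos; [apply Rmult_le_pos|]; lra).
  exists A, k. repeat split; try lra.
  - rewrite Fa_eq, PkA, PA.
    assert (q * ba A <= q * ba 0 + q * L1 * A) by nra.
    assert (E1 : epsa * sigB * (c * X) - 2 * epsa * sigB * X = - (epsa * sigB * d0 * X)) by (rewrite <- Hc2; ring).
    assert (- lam * (A - k * A) = lam * ((k - 1) * A)) by ring. lra.
  - rewrite Fs_eq, PkA, PA.
    assert (q * bs (k * A) <= q * bs 0 + q * L2 * (k * A)) by nra.
    assert (E1 : - sigB * (c * X) + epsa * sigB * X = - (sigB * d0 * X)) by (rewrite <- Hce; ring).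
    assert (- lam * (k * A - A) = lam * ((1 - k) * A)) by ring. lra.
  - rewrite Fa_eq, PmkA, PmA.
    assert (0 <= q * ba (- A)) by nra.
    assert (E1 : epsa * sigB * (- (c * X)) - 2 * epsa * sigB * (- X) = epsa * sigB * d0 * X) by (rewrite <- Hc2; ring).
    assert (- lam * (- A - - (k * A)) = - (lam * ((k - 1) * A))) by ring. lra.
  - rewrite Fs_eq, PmkA, PmA.
    assert (0 <= q * bs (- (k * A))) by (pose proof (hbs (- (k * A))); nra).
    assert (E1 : - sigB * (- (c * X)) + epsa * sigB * (- X) = sigB * d0 * X) by (rewrite <- Hce; ring).
    assert (- lam * (- (k * A) - - A) = - (lam * ((1 - k) * A))) by ring. lra.
Qed.

Lemma Fa_bound lam q sigB epsa (ba : R -> R) L1 L2 R xa xs ya ys :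
  0 <= lam -> 0 < q -> 0 < sigB -> 0 < epsa -> 0 <= L1 -> 0 <= L2 ->
  (forall x y, Rabs (ba x - ba y) <= L1 * Rabs (x - y)) ->
  Rabs xs <= R -> Rabs ys <= R -> 0 < xa - ya ->
  Fa lam q sigB epsa ba xa xs - Fa lam q sigB epsa ba ya ys <=
  (q * (L1 + L2) + lam + epsa * sigB * (4 * R ^ 3)) * ((xa - ya) + pp (xs - ys)).
Proof.
  intros hl hq hs he hL1 hL2 Hba Hxs Hys Hd. rewrite !Fa_eq.
  assert (HR : 0 <= R) by (pose proof (Rabs_pos xs); lra).
  assert (HR3 : 0 <= 4 * R ^ 3) by (pose proof (pow_le R 3 HR); lra).
  assert (Hpa : pw ya <= pw xa) by (apply pw_mono; lra).
  assert (Hb : ba xa - ba ya <= L1 * (xa - ya)).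
  { specialize (Hba xa ya). rewrite (Rabs_pos_eq (xa - ya)) in Hba by lra.
    pose proof (Rle_abs (ba xa - ba ya)). lra. }
  assert (Hs : lam * (xs - ys) + epsa * sigB * (pw xs - pw ys) <= (lam + epsa * sigB * (4 * R ^ 3)) * pp (xs - ys)).
  { destruct (Rle_dec (xs - ys) 0).
    - rewrite pp_neg by lra. assert (pw xs <= pw ys) by (apply pw_mono; lra).
      assert (0 <= epsa * sigB) by nra. nra.
    - rewrite pp_pos by lra. assert (pw xs - pw ys <= 4 * R ^ 3 * (xs - ys)) by (apply pw_lip; lra).
      assert (0 <= epsa * sigB) by nra. nra. }
  assert (0 <= pp (xs - ys)) by apply pp_ge0.
  assert (0 <= epsa * sigB) by nra.
  assert (0 <= q * L2 * (xa - ya)) by (apply Rmult_le_pos; nra).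
  assert (0 <= (q * (L1 + L2)) * pp (xs - ys)) by (apply Rmult_le_pos; nra).
  assert (0 <= (lam + epsa * sigB * (4 * R ^ 3)) * (xa - ya)) by (apply Rmult_le_pos; nra).
  assert (0 <= 2 * epsa * sigB * (pw xa - pw ya)) by nra.
  assert (q * (ba xa - ba ya) <= q * L1 * (xa - ya)) by nra.
  nra.
Qed.

Lemma Fs_bound lam q sigB epsa (bs : R -> R) L1 L2 R xa xs ya ys :
  0 <= lam -> 0 < q -> 0 < sigB -> 0 < epsa -> 0 <= L1 -> 0 <= L2 ->
  (forall x y, Rabs (bs x - bs y) <= L2 * Rabs (x - y)) ->
  Rabs xa <= R -> Rabs ya <= R -> 0 < xs - ys ->
  Fs lam q sigB epsa bs xa xs - Fs lam q sigB epsa bs ya ys <=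
  (q * (L1 + L2) + lam + epsa * sigB * (4 * R ^ 3)) * ((xs - ys) + pp (xa - ya)).
Proof.
  intros hl hq hs he hL1 hL2 Hbs Hxa Hya Hd. rewrite !Fs_eq.
  assert (HR : 0 <= R) by (pose proof (Rabs_pos xa); lra).
  assert (HR3 : 0 <= 4 * R ^ 3) by (pose proof (pow_le R 3 HR); lra).
  assert (Hps : pw ys <= pw xs) by (apply pw_mono; lra).
  assert (Hb : bs xs - bs ys <= L2 * (xs - ys)).
  { specialize (Hbs xs ys). rewrite (Rabs_pos_eq (xs - ys)) in Hbs by lra.
    pose proof (Rle_abs (bs xs - bs ys)). lra. }
  assert (Hs : lam * (xa - ya) + epsa * sigB * (pw xa - pw ya) <= (lam + epsa * sigB * (4 * R ^ 3)) * pp (xa - ya)).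
  { destruct (Rle_dec (xa - ya) 0).
    - rewrite pp_neg by lra. assert (pw xa <= pw ya) by (apply pw_mono; lra).
      assert (0 <= epsa * sigB) by nra. nra.
    - rewrite pp_pos by lra. assert (pw xa - pw ya <= 4 * R ^ 3 * (xa - ya)) by (apply pw_lip; lra).
      assert (0 <= epsa * sigB) by nra. nra. }
  assert (0 <= pp (xa - ya)) by apply pp_ge0.
  assert (0 <= epsa * sigB) by nra.
  assert (0 <= q * L1 * (xs - ys)) by (apply Rmult_le_pos; nra).
  assert (0 <= (q * (L1 + L2)) * pp (xa - ya)) by (apply Rmult_le_pos; nra).
  assert (0 <= (lam + epsa * sigB * (4 * R ^ 3)) * (xs - ys)) by (apply Rmult_le_pos; nra).
  assert (0 <= sigB * (pw xs - pw ys)) by nra.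
  assert (q * (bs xs - bs ys) <= q * L2 * (xs - ys)) by nra.
  nra.
Qed.

Lemma Fa_lip lam q sigB epsa (ba : R -> R) L1 R xa xs ya ys :
  0 <= lam -> 0 < q -> 0 < sigB -> 0 < epsa -> 0 <= L1 ->
  (forall x y, Rabs (ba x - ba y) <= L1 * Rabs (x - y)) ->
  Rabs xa <= R -> Rabs xs <= R -> Rabs ya <= R -> Rabs ys <= R ->
  Rabs (Fa lam q sigB epsa ba xa xs - Fa lam q sigB epsa ba ya ys) <=
  (q * L1 + 2 * lam + 3 * epsa * sigB * (4 * R ^ 3)) * (Rabs (xa - ya) + Rabs (xs - ys)).
Proof.
  intros hl hq hs he hL1 Hba Hxa Hxs Hya Hys. rewrite !Fa_eq.
  pose proof (pw_lip_abs xa ya R Hxa Hya). pose proof (pw_lip_abs xs ys R Hxs Hys).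
  specialize (Hba xa ya).
  assert (HR : 0 <= R) by (pose proof (Rabs_pos xa); lra).
  assert (HR3 : 0 <= 4 * R ^ 3) by (pose proof (pow_le R 3 HR); lra).
  assert (Eq : - lam * (xa - xs) + epsa * sigB * pw xs - 2 * epsa * sigB * pw xa + q * ba xa -
     (- lam * (ya - ys) + epsa * sigB * pw ys - 2 * epsa * sigB * pw ya + q * ba ya) =
   ((- lam) * (xa - ya) + lam * (xs - ys) + (epsa * sigB) * (pw xs - pw ys) + (- 2 * (epsa * sigB)) * (pw xa - pw ya) + q * (ba xa - ba ya))) by ring.
  rewrite Eq. assert (0 < epsa * sigB) by nra.
  eapply Rle_trans; [apply Rabs_triang|].
  eapply Rle_trans; [apply Rplus_le_compat_r, Rabs_triang|].
  eapply Rle_trans; [apply Rplus_le_compat_r, Rplus_le_compat_r, Rabs_triang|].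
  eapply Rle_trans; [apply Rplus_le_compat_r, Rplus_le_compat_r, Rplus_le_compat_r, Rabs_triang|].
  rewrite !Rabs_mult. rewrite (Rabs_left1 (- lam)) by lra. rewrite (Rabs_pos_eq lam) by lra.
  rewrite (Rabs_pos_eq epsa) by lra. rewrite ?(Rabs_pos_eq sigB) by lra. rewrite (Rabs_left1 (- 2)) by lra. rewrite (Rabs_pos_eq q) by lra.
  pose proof (Rabs_pos (xa - ya)). pose proof (Rabs_pos (xs - ys)).
  assert ((epsa * sigB) * Rabs (pw xs - pw ys) <= (epsa * sigB) * (4 * R ^ 3 * Rabs (xs - ys))) by (apply Rmult_le_compat_l; lra).
  assert (2 * (epsa * sigB) * Rabs (pw xa - pw ya) <= 2 * (epsa * sigB) * (4 * R ^ 3 * Rabs (xa - ya))) by (apply Rmult_le_compat_l; lra).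
  assert (q * Rabs (ba xa - ba ya) <= q * (L1 * Rabs (xa - ya))) by (apply Rmult_le_compat_l; lra).
  assert (0 <= q * L1 * Rabs (xs - ys)) by (apply Rmult_le_pos; nra).
  assert (0 <= (epsa * sigB) * (4 * R ^ 3) * Rabs (xs - ys)) by (apply Rmult_le_pos; nra).
  assert (0 <= (epsa * sigB) * (4 * R ^ 3) * Rabs (xa - ya)) by (apply Rmult_le_pos; nra).
  assert (0 <= lam * Rabs (xs - ys)) by (apply Rmult_le_pos; nra).
  assert (0 <= lam * Rabs (xa - ya)) by (apply Rmult_le_pos; nra).
  nra.
Qed.

Lemma Fs_lip lam q sigB epsa (bs : R -> R) L2 R xa xs ya ys :
  0 <= lam -> 0 < q -> 0 < sigB -> 0 < epsa -> epsa < 2 -> 0 <= L2 ->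
  (forall x y, Rabs (bs x - bs y) <= L2 * Rabs (x - y)) ->
  Rabs xa <= R -> Rabs xs <= R -> Rabs ya <= R -> Rabs ys <= R ->
  Rabs (Fs lam q sigB epsa bs xa xs - Fs lam q sigB epsa bs ya ys) <=
  (q * L2 + 2 * lam + 3 * sigB * (4 * R ^ 3)) * (Rabs (xa - ya) + Rabs (xs - ys)).
Proof.
  intros hl hq hs he he2 hL2 Hbs Hxa Hxs Hya Hys. rewrite !Fs_eq.
  pose proof (pw_lip_abs xa ya R Hxa Hya). pose proof (pw_lip_abs xs ys R Hxs Hys).
  specialize (Hbs xs ys).
  assert (HR : 0 <= R) by (pose proof (Rabs_pos xa); lra).
  assert (HR3 : 0 <= 4 * R ^ 3) by (pose proof (pow_le R 3 HR); lra).
  assert (Eq : - lam * (xs - xa) - sigB * pw xs + epsa * sigB * pw xa + q * bs xs -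
     (- lam * (ys - ya) - sigB * pw ys + epsa * sigB * pw ya + q * bs ys) =
   ((- lam) * (xs - ys) + lam * (xa - ya) + (- sigB) * (pw xs - pw ys) + (epsa * sigB) * (pw xa - pw ya) + q * (bs xs - bs ys))) by ring.
  rewrite Eq. assert (0 < epsa * sigB) by nra. assert ((epsa * sigB) <= 2 * sigB) by nra.
  eapply Rle_trans; [apply Rabs_triang|].
  eapply Rle_trans; [apply Rplus_le_compat_r, Rabs_triang|].
  eapply Rle_trans; [apply Rplus_le_compat_r, Rplus_le_compat_r, Rabs_triang|].
  eapply Rle_trans; [apply Rplus_le_compat_r, Rplus_le_compat_r, Rplus_le_compat_r, Rabs_triang|].
  rewrite !Rabs_mult. rewrite (Rabs_left1 (- lam)) by lra. rewrite (Rabs_pos_eq lam) by lra.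
  rewrite (Rabs_pos_eq epsa) by lra. rewrite ?(Rabs_pos_eq sigB) by lra. rewrite (Rabs_left1 (- sigB)) by lra. rewrite (Rabs_pos_eq q) by lra.
  pose proof (Rabs_pos (xa - ya)). pose proof (Rabs_pos (xs - ys)).
  assert (sigB * Rabs (pw xs - pw ys) <= sigB * (4 * R ^ 3 * Rabs (xs - ys))) by (apply Rmult_le_compat_l; lra).
  assert ((epsa * sigB) * Rabs (pw xa - pw ya) <= 2 * sigB * (4 * R ^ 3 * Rabs (xa - ya))).
  { eapply Rle_trans; [apply Rmult_le_compat_l; [lra|eassumption]|]. apply Rmult_le_compat_r; [nra|lra]. }
  assert (q * Rabs (bs xs - bs ys) <= q * (L2 * Rabs (xs - ys))) by (apply Rmult_le_compat_l; lra).
  assert (0 <= q * L2 * Rabs (xa - ya)) by (apply Rmult_le_pos; nra).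
  assert (0 <= sigB * (4 * R ^ 3) * Rabs (xs - ys)) by (apply Rmult_le_pos; nra).
  assert (0 <= sigB * (4 * R ^ 3) * Rabs (xa - ya)) by (apply Rmult_le_pos; nra).
  assert (0 <= lam * Rabs (xs - ys)) by (apply Rmult_le_pos; nra).
  assert (0 <= lam * Rabs (xa - ya)) by (apply Rmult_le_pos; nra).
  nra.
Qed.

Lemma pp_le x b : x <= b -> 0 <= b -> pp x <= b.
Proof. intros. unfold pp. apply Rmax_lub; lra. Qed.
Lemma pp_ge x : x <= pp x.
Proof. unfold pp. apply Rmax_l. Qed.

Lemma quad_core (fa fs : R -> R) sg t0 t wa0 ws0 wa1 E :
  (sg = 1 \/ sg = -1) -> 0 < E ->
  (forall h, 0 < h -> pp (sg * (fa t - fa (t + h))) ^ 2 + pp (sg * (fs t - fs (t + h))) ^ 2 <=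
     E * (pp (sg * (fa t0 - fa (t0 + h))) ^ 2 + pp (sg * (fs t0 - fs (t0 + h))) ^ 2)) ->
  is_derive fa t0 wa0 -> is_derive fs t0 ws0 -> 0 <= sg * wa0 -> 0 <= sg * ws0 ->
  is_derive fa t wa1 -> 0 <= sg * wa1.
Proof.
  intros Hsg HE Hcmp Da0 Ds0 Hwa0 Hws0 Da1.
  apply Rnot_lt_le. intro Hc.
  set (c := - (sg * wa1)). assert (Hc0 : 0 < c) by (unfold c; lra).
  set (eps := c / (4 * (1 + E))).
  assert (Heps : c = 4 * (1 + E) * eps) by (unfold eps; field; lra).
  assert (Heps0 : 0 < eps) by (unfold eps; apply Rdiv_lt_0_compat; lra).
  destruct (deriv_eps fa t0 wa0 Da0 eps Heps0) as [d1 [Hd1 H1]].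
  destruct (deriv_eps fs t0 ws0 Ds0 eps Heps0) as [d2 [Hd2 H2]].
  destruct (deriv_eps fa t wa1 Da1 (c / 2) ltac:(lra)) as [d3 [Hd3 H3]].
  set (h := Rmin d1 (Rmin d2 d3) / 2).
  assert (Hm : 0 < Rmin d1 (Rmin d2 d3)) by (repeat apply Rmin_glb_lt; auto).
  assert (Hh : 0 < h) by (unfold h; lra).
  assert (Hh1 : h < d1) by (unfold h; pose proof (Rmin_l d1 (Rmin d2 d3)); lra).
  assert (Hh2 : h < d2) by (unfold h; pose proof (Rmin_r d1 (Rmin d2 d3)); pose proof (Rmin_l d2 d3); lra).
  assert (Hh3 : h < d3) by (unfold h; pose proof (Rmin_r d1 (Rmin d2 d3)); pose proof (Rmin_r d2 d3); lra).
  assert (Habs : Rabs h = h) by (apply Rabs_pos_eq; lra).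
  specialize (H1 h ltac:(lra)). specialize (H2 h ltac:(lra)). specialize (H3 h ltac:(lra)).
  rewrite Habs in H1, H2, H3.
  apply Rabs_le_between in H1. apply Rabs_le_between in H2. apply Rabs_le_between in H3.
  assert (A1 : sg * (fa t0 - fa (t0 + h)) <= eps * h) by (destruct Hsg; subst sg; nra).
  assert (A2 : sg * (fs t0 - fs (t0 + h)) <= eps * h) by (destruct Hsg; subst sg; nra).
  assert (A3 : c / 2 * h <= sg * (fa t - fa (t + h))) by (unfold c in *; destruct Hsg; subst sg; nra).
  assert (B1 : pp (sg * (fa t0 - fa (t0 + h))) <= eps * h) by (apply pp_le; nra).
  assert (B2 : pp (sg * (fs t0 - fs (t0 + h))) <= eps * h) by (apply pp_le; nra).
  assert (B3 : c / 2 * h <= pp (sg * (fa t - fa (t + h)))) by (eapply Rle_trans; [exact A3|apply pp_ge]).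
  specialize (Hcmp h Hh).
  set (w := eps * h) in *. assert (Hw : 0 < w) by (unfold w; nra).
  set (a1 := pp (sg * (fa t0 - fa (t0 + h)))) in *.
  set (a2 := pp (sg * (fs t0 - fs (t0 + h)))) in *.
  set (a3 := pp (sg * (fa t - fa (t + h)))) in *.
  set (a4 := pp (sg * (fs t - fs (t + h)))) in *.
  assert (0 <= a1) by apply pp_ge0. assert (0 <= a2) by apply pp_ge0. assert (0 <= a4) by apply pp_ge0.
  assert (a1 ^ 2 <= w ^ 2) by (apply pow_incr; lra).
  assert (a2 ^ 2 <= w ^ 2) by (apply pow_incr; lra).
  assert (Hc2 : c / 2 * h = 2 * (1 + E) * w) by (unfold w; rewrite Heps; field).
  assert ((2 * (1 + E) * w) ^ 2 <= a3 ^ 2) by (apply pow_incr; nra).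
  assert (0 <= a4 ^ 2) by (apply pow_le; lra).
  assert (E * (a1 ^ 2 + a2 ^ 2) <= E * (2 * w ^ 2)) by (apply Rmult_le_compat_l; lra).
  assert (0 < w ^ 2) by (apply pow_lt; lra).
  assert ((2 * (1 + E) * w) ^ 2 = 4 * (1 + E) ^ 2 * w ^ 2) by ring.
  assert (2 * E < 4 * (1 + E) ^ 2) by nra.
  assert (2 * E * w ^ 2 < 4 * (1 + E) ^ 2 * w ^ 2) by (apply Rmult_lt_compat_r; lra).
  lra.
Qed.

Lemma const_sign (g : R -> R) T :
  (forall t, T <= t -> continuity_pt g t) -> (forall t, T <= t -> g t <> 0) ->
  (forall t, T <= t -> 0 < g t) \/ (forall t, T <= t -> g t < 0).
Proof.
  intros Hc Hn. destruct (Rlt_dec 0 (g T)) as [Hp|Hp].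
  - left. intros t Ht. apply Rnot_le_lt. intro Hle.
    destruct (Rle_lt_or_eq_dec _ _ Hle) as [Hl|He]; [|apply (Hn t Ht); auto].
    destruct (Req_dec t T) as [->|HtT]; [lra|].
    destruct (Ranalysis5.IVT_interv (fun x => - g x) T t) as [z [Hz1 Hz2]].
    + intros a Ha. apply continuity_pt_opp, Hc. lra.
    + lra.
    + lra.
    + lra.
    + apply (Hn z); lra.
  - right. assert (g T <> 0) by (apply Hn; lra). assert (g T < 0) by lra.
    intros t Ht. apply Rnot_le_lt. intro Hle.
    destruct (Rle_lt_or_eq_dec _ _ Hle) as [Hl|He]; [|apply (Hn t Ht); auto].
    destruct (Req_dec t T) as [->|HtT]; [lra|].
    destruct (Ranalysis5.IVT_interv g T t) as [z [Hz1 Hz2]].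
    + intros a Ha. apply Hc. lra.
    + lra.
    + lra.
    + lra.
    + apply (Hn z); lra.
Qed.

Lemma mono_lim (f : R -> R) T Rb : monotone_from T f -> (forall t, T <= t -> Rabs (f t) <= Rb) ->
  exists l : R, is_lim f p_infty l /\ Rabs l <= Rb.
Proof.
  intros [Hm|Hm] Hb.
  - destruct (bounded_incr_lim f T Rb Hm) as [l [Hl [Hl1 Hl2]]].
    { intros t Ht. specialize (Hb t Ht). apply Rabs_le_between in Hb. lra. }
    exists l. split; auto. apply Rabs_le_between. split; auto.
    specialize (Hl1 T (Rle_refl _)). specialize (Hb T (Rle_refl _)). apply Rabs_le_between in Hb. lra.
  - destruct (bounded_incr_lim (fun t => - f t) T Rb) as [l [Hl [Hl1 Hl2]]].
    { intros t1 t2 H1 H2. specialize (Hm t1 t2 H1 H2). lra. }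
    { intros t Ht. specialize (Hb t Ht). apply Rabs_le_between in Hb. lra. }
    exists (- l). split.
    + apply is_lim_opp in Hl. eapply is_lim_ext; [|exact Hl]. intros y. simpl. ring.
    + apply Rabs_le_between.
      specialize (Hl1 T (Rle_refl _)). specialize (Hb T (Rle_refl _)). apply Rabs_le_between in Hb. lra.
Qed.

Lemma Fa_mono_s lam q sigB epsa ba a s s' : 0 <= lam -> 0 < sigB -> 0 < epsa -> s <= s' ->
  Fa lam q sigB epsa ba a s <= Fa lam q sigB epsa ba a s'.
Proof.
  intros. rewrite !Fa_eq. pose proof (pw_mono s' s H2).
  assert (0 <= epsa * sigB) by nra. nra.
Qed.
Lemma Fs_mono_a lam q sigB epsa bs a a' s : 0 <= lam -> 0 < sigB -> 0 < epsa -> a <= a' ->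
  Fs lam q sigB epsa bs a s <= Fs lam q sigB epsa bs a' s.
Proof.
  intros. rewrite !Fs_eq. pose proof (pw_mono a' a H2).
  assert (0 <= epsa * sigB) by nra. nra.
Qed.

Lemma shift_derive (f : R -> R) h t l : is_derive f (t + h) l -> is_derive (fun r => f (r + h)) t l.
Proof.
  intros Hd. assert (Hg : is_derive (fun r => r + h) t 1).
  { assert (H1 := dplus (fun r => r) (fun _ => h) t 1 0 (is_derive_id (K := R_AbsRing) t)
       (is_derive_const (K := R_AbsRing) (V := R_NormedModule) h t)).
    rewrite Rplus_0_r in H1. exact H1. }
  assert (H := dcomp f (fun r => r + h) t l 1 Hd Hg). rewrite Rmult_1_l in H. exact H.
Qed.

Lemma cmp_pair gam_a gam_s lam q sigB epsa (ba bs : R -> R) L1 L2 Rb (Xa Xs Ya Ys : R -> R) t0 :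
  0 < gam_a -> 0 < gam_s -> 0 <= lam -> 0 < q -> 0 < sigB -> 0 < epsa -> 0 <= L1 -> 0 <= L2 -> 0 <= Rb ->
  (forall x y, Rabs (ba x - ba y) <= L1 * Rabs (x - y)) ->
  (forall x y, Rabs (bs x - bs y) <= L2 * Rabs (x - y)) ->
  (forall t, t0 <= t -> is_derive Xa t (Fa lam q sigB epsa ba (Xa t) (Xs t) / gam_a)) ->
  (forall t, t0 <= t -> is_derive Xs t (Fs lam q sigB epsa bs (Xa t) (Xs t) / gam_s)) ->
  (forall t, t0 <= t -> is_derive Ya t (Fa lam q sigB epsa ba (Ya t) (Ys t) / gam_a)) ->
  (forall t, t0 <= t -> is_derive Ys t (Fs lam q sigB epsa bs (Ya t) (Ys t) / gam_s)) ->
  (forall t, t0 <= t -> Rabs (Xa t) <= Rb /\ Rabs (Xs t) <= Rb /\ Rabs (Ya t) <= Rb /\ Rabs (Ys t) <= Rb) ->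
  forall t, t0 <= t -> pp (Xa t - Ya t) ^ 2 + pp (Xs t - Ys t) ^ 2 <=
    exp (4 * ((q * (L1 + L2) + lam + epsa * sigB * (4 * Rb ^ 3)) / gam_a +
              (q * (L1 + L2) + lam + epsa * sigB * (4 * Rb ^ 3)) / gam_s) * (t - t0)) *
    (pp (Xa t0 - Ya t0) ^ 2 + pp (Xs t0 - Ys t0) ^ 2).
Proof.
  intros hga hgs hl hq hs he hL1 hL2 hRb Hba Hbs DXa DXs DYa DYs Hb.
  set (Kb := q * (L1 + L2) + lam + epsa * sigB * (4 * Rb ^ 3)).
  assert (HKb : 0 <= Kb).
  { unfold Kb. assert (0 <= Rb ^ 3) by (apply pow_le; lra).
    assert (0 <= q * (L1 + L2)) by nra. assert (0 <= epsa * sigB) by nra. nra. }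
  assert (Hk1 : 0 <= Kb / gam_a) by (apply Rdiv_le_0_compat; lra).
  assert (Hk2 : 0 <= Kb / gam_s) by (apply Rdiv_le_0_compat; lra).
  apply (compare (fun t => Xa t - Ya t) (fun t => Xs t - Ys t)
     (fun t => Fa lam q sigB epsa ba (Xa t) (Xs t) / gam_a - Fa lam q sigB epsa ba (Ya t) (Ys t) / gam_a)
     (fun t => Fs lam q sigB epsa bs (Xa t) (Xs t) / gam_s - Fs lam q sigB epsa bs (Ya t) (Ys t) / gam_s)).
  - lra.
  - intros t Ht. apply dminus; auto.
  - intros t Ht. apply dminus; auto.
  - intros t Ht Hd. destruct (Hb t Ht) as [B1 [B2 [B3 B4]]].
    pose proof (Fa_bound lam q sigB epsa ba L1 L2 Rb (Xa t) (Xs t) (Ya t) (Ys t) hl hq hs he hL1 hL2 Hba B2 B4 Hd) as F.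
    fold Kb in F. pose proof (pp_ge0 (Xs t - Ys t)).
    replace (Fa lam q sigB epsa ba (Xa t) (Xs t) / gam_a - Fa lam q sigB epsa ba (Ya t) (Ys t) / gam_a)
      with ((Fa lam q sigB epsa ba (Xa t) (Xs t) - Fa lam q sigB epsa ba (Ya t) (Ys t)) / gam_a) by (field; lra).
    apply Rle_trans with (Kb / gam_a * (Xa t - Ya t + pp (Xs t - Ys t))).
    + unfold Rdiv. rewrite (Rmult_comm Kb), Rmult_assoc. rewrite (Rmult_comm (/ gam_a)).
      apply Rmult_le_compat_r; [apply Rlt_le, Rinv_0_lt_compat; lra|]. lra.
    + apply Rmult_le_compat_r; lra.
  - intros t Ht Hd. destruct (Hb t Ht) as [B1 [B2 [B3 B4]]].
    pose proof (Fs_bound lam q sigB epsa bs L1 L2 Rb (Xa t) (Xs t) (Ya t) (Ys t) hl hq hs he hL1 hL2 Hbs B1 B3 Hd) as F.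
    fold Kb in F. pose proof (pp_ge0 (Xa t - Ya t)).
    replace (Fs lam q sigB epsa bs (Xa t) (Xs t) / gam_s - Fs lam q sigB epsa bs (Ya t) (Ys t) / gam_s)
      with ((Fs lam q sigB epsa bs (Xa t) (Xs t) - Fs lam q sigB epsa bs (Ya t) (Ys t)) / gam_s) by (field; lra).
    apply Rle_trans with (Kb / gam_s * (Xs t - Ys t + pp (Xa t - Ya t))).
    + unfold Rdiv. rewrite (Rmult_comm Kb), Rmult_assoc. rewrite (Rmult_comm (/ gam_s)).
      apply Rmult_le_compat_r; [apply Rlt_le, Rinv_0_lt_compat; lra|]. lra.
    + apply Rmult_le_compat_r; lra.
Qed.

Lemma cont_comp (G : R -> R -> R) (x y : R -> R) t lx ly Kl g : 0 < t -> 0 < g -> 0 <= Kl ->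
  is_derive x t lx -> is_derive y t ly ->
  (forall r, 0 <= r -> Rabs (G (x r) (y r) - G (x t) (y t)) <= Kl * (Rabs (x r - x t) + Rabs (y r - y t))) ->
  continuity_pt (fun r => G (x r) (y r) / g) t.
Proof.
  intros Ht Hg HK Dx Dy HL. apply continuity_pt_filterlim, filterlim_locally. intros eps.
  set (e := eps * g / (2 * (Kl + 1))).
  assert (He : 0 < e) by (unfold e; apply Rdiv_lt_0_compat; [apply Rmult_lt_0_compat; [apply cond_pos|lra]|lra]).
  destruct (deriv_cont x t lx Dx e He) as [d1 [Hd1 H1]].
  destruct (deriv_cont y t ly Dy e He) as [d2 [Hd2 H2]].
  assert (Hd : 0 < Rmin t (Rmin d1 d2)) by (repeat apply Rmin_glb_lt; auto).
  exists (mkposreal _ Hd). intros r Hr.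
  unfold ball in *; simpl in *. unfold AbsRing_ball, abs, minus, plus, opp in *; simpl in *.
  fold (r - t) in Hr.
  assert (Hr1 : Rabs (r - t) < t) by (eapply Rlt_le_trans; [exact Hr|apply Rmin_l]).
  assert (Hr2 : Rabs (r - t) < d1) by (eapply Rlt_le_trans; [exact Hr|eapply Rle_trans; [apply Rmin_r|apply Rmin_l]]).
  assert (Hr3 : Rabs (r - t) < d2) by (eapply Rlt_le_trans; [exact Hr|eapply Rle_trans; [apply Rmin_r|apply Rmin_r]]).
  assert (Hr0 : 0 <= r) by (apply Rabs_def2 in Hr1; lra).
  specialize (H1 r Hr2). specialize (H2 r Hr3). specialize (HL r Hr0).
  replace (G (x r) (y r) / g + - (G (x t) (y t) / g)) with ((G (x r) (y r) - G (x t) (y t)) / g) by (field; lra).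
  unfold Rdiv. rewrite Rabs_mult, (Rabs_pos_eq (/ g)) by (apply Rlt_le, Rinv_0_lt_compat; lra).
  apply (Rmult_lt_reg_r g); auto. rewrite Rmult_assoc, Rinv_l, Rmult_1_r by lra.
  assert (Kl * (Rabs (x r - x t) + Rabs (y r - y t)) <= Kl * (2 * e)) by (apply Rmult_le_compat_l; lra).
  assert (Kl * (2 * e) < eps * g).
  { unfold e. replace (Kl * (2 * (eps * g / (2 * (Kl + 1))))) with ((eps * g) * (Kl / (Kl + 1))) by (field; lra).
    assert (Kl / (Kl + 1) < 1) by (apply (Rmult_lt_reg_r (Kl + 1)); [lra|]; unfold Rdiv; rewrite Rmult_assoc, Rinv_l; lra).
    assert (0 < eps * g) by (apply Rmult_lt_0_compat; [apply cond_pos|lra]). nra. }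
  lra.
Qed.

Lemma lim_comp (G : R -> R -> R) (x y : R -> R) (a s Kl g : R) : 0 < g -> 0 <= Kl ->
  is_lim x p_infty a -> is_lim y p_infty s ->
  (forall r, 0 <= r -> Rabs (G (x r) (y r) - G a s) <= Kl * (Rabs (x r - a) + Rabs (y r - s))) ->
  forall eps, 0 < eps -> exists M, forall t, M < t -> Rabs (G (x t) (y t) / g - G a s / g) < eps.
Proof.
  intros Hg HK Hx Hy HL eps Heps.
  apply is_lim_spec in Hx. apply is_lim_spec in Hy. unfold is_lim' in Hx, Hy.
  set (e := eps * g / (2 * (Kl + 1))).
  assert (He : 0 < e) by (unfold e; apply Rdiv_lt_0_compat; [apply Rmult_lt_0_compat|]; lra).
  destruct (Hx (mkposreal e He)) as [M1 HM1]. destruct (Hy (mkposreal e He)) as [M2 HM2].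
  simpl in HM1, HM2.
  exists (Rmax 0 (Rmax M1 M2)). intros t Ht.
  pose proof (Rmax_l 0 (Rmax M1 M2)). pose proof (Rmax_r 0 (Rmax M1 M2)).
  pose proof (Rmax_l M1 M2). pose proof (Rmax_r M1 M2).
  specialize (HM1 t ltac:(lra)). specialize (HM2 t ltac:(lra)). specialize (HL t ltac:(lra)).
  replace (G (x t) (y t) / g - G a s / g) with ((G (x t) (y t) - G a s) / g) by (field; lra).
  unfold Rdiv. rewrite Rabs_mult, (Rabs_pos_eq (/ g)) by (apply Rlt_le, Rinv_0_lt_compat; lra).
  apply (Rmult_lt_reg_r g); auto. rewrite Rmult_assoc, Rinv_l, Rmult_1_r by lra.
  assert (Kl * (Rabs (x t - a) + Rabs (y t - s)) <= Kl * (2 * e)) by (apply Rmult_le_compat_l; lra).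
  assert (Kl * (2 * e) < eps * g).
  { unfold e. replace (Kl * (2 * (eps * g / (2 * (Kl + 1))))) with ((eps * g) * (Kl / (Kl + 1))) by (field; lra).
    assert (Kl / (Kl + 1) < 1) by (apply (Rmult_lt_reg_r (Kl + 1)); [lra|]; unfold Rdiv; rewrite Rmult_assoc, Rinv_l; lra).
    assert (0 < eps * g) by (apply Rmult_lt_0_compat; lra). nra. }
  lra.
Qed.

Lemma mono_of_sign (f df : R -> R) T : (forall t, T <= t -> is_derive f t (df t)) ->
  ((forall t, T <= t -> 0 <= df t) \/ (forall t, T <= t -> df t <= 0)) -> monotone_from T f.
Proof.
  intros Hd [Hp|Hn].
  - left. apply (mono_from_deriv f df T Hd Hp).
  - right. intros t1 t2 H1 H2.
    assert (HH := mono_from_deriv (fun t => - f t) (fun t => - df t) T).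
    assert (- f t1 <= - f t2); [|lra]. apply HH; auto.
    + intros t Ht. apply (is_derive_opp (K := R_AbsRing) (V := R_NormedModule)), Hd, Ht.
    + intros t Ht. specialize (Hn t Ht). lra.
Qed.

Lemma m1_minus x y : -1 * (x - y) = y - x.
Proof. ring. Qed.

Theorem theorem4p6
  (gam_a gam_s lam q sigB epsa : R) (ba bs : R -> R)
  (hga : 0 < gam_a) (hgs : 0 < gam_s) (hlam : 0 <= lam) (hq : 0 < q)
  (hsig : 0 < sigB) (heps0 : 0 < epsa) (heps2 : epsa < 2)
  (hba_lip : lipschitz ba) (hbs_lip : lipschitz bs)
  (hba : forall x, 0 <= ba x) (hbs : forall x, 0 < bs x)
  (Ta0 Ts0 : R) (hTa0 : 0 <= Ta0) (hTs0 : 0 <= Ts0)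
  (Ta Ts : R -> R)
  (hinit_a : Ta 0 = Ta0) (hinit_s : Ts 0 = Ts0)
  (hcont_a : filterlim Ta (at_right 0) (locally (Ta 0)))
  (hcont_s : filterlim Ts (at_right 0) (locally (Ts 0)))
  (hode_a : forall t, 0 < t ->
     is_derive Ta t (Fa lam q sigB epsa ba (Ta t) (Ts t) / gam_a))
  (hode_s : forall t, 0 < t ->
     is_derive Ts t (Fs lam q sigB epsa bs (Ta t) (Ts t) / gam_s)) :
  (exists a s : R,
     is_equilibrium lam q sigB epsa ba bs a s /\
     is_lim Ta p_infty a /\ is_lim Ts p_infty s) /\
  (exists T : R, 0 <= T /\ monotone_from T Ta /\ monotone_from T Ts).
Proof.
  destruct hba_lip as [L1 [hL1 Hba]]. destruct hbs_lip as [L2 [hL2 Hbs]].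
  destruct (corners lam q sigB epsa ba bs Ta0 Ts0 L1 L2 hlam hq hsig heps0 heps2 hL1 hL2 Hba Hbs hba hbs hTa0 hTs0)
    as [A [k [HA [Hk [HA0 [HkA0 [C1 [C2 [C3 C4]]]]]]]]].
  assert (Box : forall t, 0 <= t -> - A < Ta t < A /\ - (k * A) < Ts t < k * A).
  { apply (barrier Ta Ts (Fa lam q sigB epsa ba) (Fs lam q sigB epsa bs) gam_a gam_s); auto.
    - rewrite hinit_a. lra.
    - rewrite hinit_s. nra.
    - intros s Hs. eapply Rle_lt_trans; [apply (Fa_mono_s _ _ _ _ _ _ s (k * A)); lra|]. exact C1.
    - intros s Hs. eapply Rlt_le_trans; [exact C3|apply Fa_mono_s; lra].
    - intros a Ha. eapply Rle_lt_trans; [apply (Fs_mono_a _ _ _ _ _ a A); lra|]. exact C2.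
    - intros a Ha. eapply Rlt_le_trans; [exact C4|apply Fs_mono_a; lra]. }
  set (Rb := A + k * A).
  assert (HRb : 0 <= Rb) by (unfold Rb; nra).
  assert (Bd : forall t, 0 <= t -> Rabs (Ta t) <= Rb /\ Rabs (Ts t) <= Rb).
  { intros t Ht. destruct (Box t Ht). split; apply Rabs_le_between; unfold Rb; nra. }
  set (Kb := q * (L1 + L2) + lam + epsa * sigB * (4 * Rb ^ 3)).
  set (K := Kb / gam_a + Kb / gam_s).
  assert (Quad : forall sg t0, (sg = 1 \/ sg = -1) -> 0 < t0 ->
     0 <= sg * (Fa lam q sigB epsa ba (Ta t0) (Ts t0) / gam_a) ->
     0 <= sg * (Fs lam q sigB epsa bs (Ta t0) (Ts t0) / gam_s) ->
     forall t, t0 <= t -> 0 <= sg * (Fa lam q sigB epsa ba (Ta t) (Ts t) / gam_a) /\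
                          0 <= sg * (Fs lam q sigB epsa bs (Ta t) (Ts t) / gam_s)).
  { intros sg t0 Hsg Ht0 Hwa0 Hws0 t Ht.
    set (E := exp (4 * K * (t - t0))).
    assert (HE : 0 < E) by apply exp_pos.
    assert (Cmp : forall h, 0 < h ->
      pp (sg * (Ta t - Ta (t + h))) ^ 2 + pp (sg * (Ts t - Ts (t + h))) ^ 2 <=
      E * (pp (sg * (Ta t0 - Ta (t0 + h))) ^ 2 + pp (sg * (Ts t0 - Ts (t0 + h))) ^ 2)).
    { intros h Hh. unfold E, K, Kb. destruct Hsg; subst sg.
      - rewrite !Rmult_1_l.
        apply (cmp_pair gam_a gam_s lam q sigB epsa ba bs L1 L2 Rb Ta Ts (fun r => Ta (r + h)) (fun r => Ts (r + h)) t0);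
          auto; try lra.
        + intros r Hr. apply hode_a. lra.
        + intros r Hr. apply hode_s. lra.
        + intros r Hr. apply shift_derive, hode_a. lra.
        + intros r Hr. apply shift_derive, hode_s. lra.
        + intros r Hr. destruct (Bd r ltac:(lra)). destruct (Bd (r + h) ltac:(lra)). auto.
      - rewrite !m1_minus.
        apply (cmp_pair gam_a gam_s lam q sigB epsa ba bs L1 L2 Rb (fun r => Ta (r + h)) (fun r => Ts (r + h)) Ta Ts t0);
          auto; try lra.
        + intros r Hr. apply shift_derive, hode_a. lra.
        + intros r Hr. apply shift_derive, hode_s. lra.
        + intros r Hr. apply hode_a. lra.
        + intros r Hr. apply hode_s. lra.
        + intros r Hr. destruct (Bd r ltac:(lra)). destruct (Bd (r + h) ltac:(lra)). auto. }
    split.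
    - apply (quad_core Ta Ts sg t0 t _ _ _ E Hsg HE Cmp (hode_a t0 Ht0) (hode_s t0 Ht0) Hwa0 Hws0 (hode_a t ltac:(lra))).
    - refine (quad_core Ts Ta sg t0 t _ _ _ E Hsg HE _ (hode_s t0 Ht0) (hode_a t0 Ht0) Hws0 Hwa0 (hode_s t ltac:(lra))).
      intros h Hh. rewrite Rplus_comm, (Rplus_comm (pp (sg * (Ts t0 - Ts (t0 + h))) ^ 2)). apply Cmp, Hh. }
  set (Kl := q * (L1 + L2) + 2 * lam + 3 * (epsa + 1) * sigB * (4 * Rb ^ 3)).
  assert (HKl : 0 <= Kl).
  { unfold Kl. assert (0 <= Rb ^ 3) by (apply pow_le; lra).
    assert (0 <= q * (L1 + L2)) by nra. assert (0 <= (epsa + 1) * sigB) by nra. nra. }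
  assert (LipA : forall xa xs ya ys, Rabs xa <= Rb -> Rabs xs <= Rb -> Rabs ya <= Rb -> Rabs ys <= Rb ->
     Rabs (Fa lam q sigB epsa ba xa xs - Fa lam q sigB epsa ba ya ys) <= Kl * (Rabs (xa - ya) + Rabs (xs - ys))).
  { intros xa xs ya ys H1 H2 H3 H4.
    eapply Rle_trans; [apply (Fa_lip lam q sigB epsa ba L1 Rb); auto|].
    apply Rmult_le_compat_r; [pose proof (Rabs_pos (xa - ya)); pose proof (Rabs_pos (xs - ys)); lra|].
    unfold Kl. assert (0 <= Rb ^ 3) by (apply pow_le; lra). assert (0 <= q * L2) by nra.
    assert (0 <= sigB * (4 * Rb ^ 3)) by nra. nra. }
  assert (LipS : forall xa xs ya ys, Rabs xa <= Rb -> Rabs xs <= Rb -> Rabs ya <= Rb -> Rabs ys <= Rb ->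
     Rabs (Fs lam q sigB epsa bs xa xs - Fs lam q sigB epsa bs ya ys) <= Kl * (Rabs (xa - ya) + Rabs (xs - ys))).
  { intros xa xs ya ys H1 H2 H3 H4.
    eapply Rle_trans; [apply (Fs_lip lam q sigB epsa bs L2 Rb); auto|].
    apply Rmult_le_compat_r; [pose proof (Rabs_pos (xa - ya)); pose proof (Rabs_pos (xs - ys)); lra|].
    unfold Kl. assert (0 <= Rb ^ 3) by (apply pow_le; lra). assert (0 <= q * L1) by nra.
    assert (0 <= epsa * sigB * (4 * Rb ^ 3)) by (apply Rmult_le_pos; nra). nra. }
  assert (Mono : exists T, 0 < T /\ monotone_from T Ta /\ monotone_from T Ts).
  { destruct (classic (exists t0, 0 < t0 /\ 0 <= Fa lam q sigB epsa ba (Ta t0) (Ts t0) / gam_a /\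
                                   0 <= Fs lam q sigB epsa bs (Ta t0) (Ts t0) / gam_s)) as [[t0 [H0 [H1 H2]]]|N1].
    { exists t0. assert (Q := Quad 1 t0 (or_introl eq_refl) H0 ltac:(lra) ltac:(lra)).
      split; [auto|split].
      - apply (mono_of_sign Ta (fun t => Fa lam q sigB epsa ba (Ta t) (Ts t) / gam_a)).
        + intros t Ht. apply hode_a. lra.
        + left. intros t Ht. destruct (Q t Ht). lra.
      - apply (mono_of_sign Ts (fun t => Fs lam q sigB epsa bs (Ta t) (Ts t) / gam_s)).
        + intros t Ht. apply hode_s. lra.
        + left. intros t Ht. destruct (Q t Ht). lra. }
    destruct (classic (exists t0, 0 < t0 /\ Fa lam q sigB epsa ba (Ta t0) (Ts t0) / gam_a <= 0 /\
                                   Fs lam q sigB epsa bs (Ta t0) (Ts t0) / gam_s <= 0)) as [[t0 [H0 [H1 H2]]]|N2].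
    { exists t0. assert (Q := Quad (-1) t0 (or_intror eq_refl) H0 ltac:(lra) ltac:(lra)).
      split; [auto|split].
      - apply (mono_of_sign Ta (fun t => Fa lam q sigB epsa ba (Ta t) (Ts t) / gam_a)).
        + intros t Ht. apply hode_a. lra.
        + right. intros t Ht. destruct (Q t Ht). lra.
      - apply (mono_of_sign Ts (fun t => Fs lam q sigB epsa bs (Ta t) (Ts t) / gam_s)).
        + intros t Ht. apply hode_s. lra.
        + right. intros t Ht. destruct (Q t Ht). lra. }
    assert (Nz : forall t, 0 < t -> Fa lam q sigB epsa ba (Ta t) (Ts t) / gam_a <> 0 /\
                                Fs lam q sigB epsa bs (Ta t) (Ts t) / gam_s <> 0).
    { intros t Ht. split; intro Hz.
      - destruct (Rle_dec 0 (Fs lam q sigB epsa bs (Ta t) (Ts t) / gam_s)).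
        + apply N1. exists t. repeat split; auto; lra.
        + apply N2. exists t. repeat split; auto; lra.
      - destruct (Rle_dec 0 (Fa lam q sigB epsa ba (Ta t) (Ts t) / gam_a)).
        + apply N1. exists t. repeat split; auto; lra.
        + apply N2. exists t. repeat split; auto; lra. }
    assert (CA : forall t, 1 <= t -> continuity_pt (fun r => Fa lam q sigB epsa ba (Ta r) (Ts r) / gam_a) t).
    { intros t Ht. apply (cont_comp (Fa lam q sigB epsa ba) Ta Ts t (Fa lam q sigB epsa ba (Ta t) (Ts t) / gam_a) (Fs lam q sigB epsa bs (Ta t) (Ts t) / gam_s) Kl gam_a); auto; try lra.
      - apply hode_a; lra.
      - apply hode_s; lra.
      - intros r Hr. destruct (Bd r Hr). destruct (Bd t ltac:(lra)). apply LipA; auto. }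
    assert (CS : forall t, 1 <= t -> continuity_pt (fun r => Fs lam q sigB epsa bs (Ta r) (Ts r) / gam_s) t).
    { intros t Ht. apply (cont_comp (Fs lam q sigB epsa bs) Ta Ts t (Fa lam q sigB epsa ba (Ta t) (Ts t) / gam_a) (Fs lam q sigB epsa bs (Ta t) (Ts t) / gam_s) Kl gam_s); auto; try lra.
      - apply hode_a; lra.
      - apply hode_s; lra.
      - intros r Hr. destruct (Bd r Hr). destruct (Bd t ltac:(lra)). apply LipS; auto. }
    exists 1. split; [lra|split].
    - apply (mono_of_sign Ta (fun t => Fa lam q sigB epsa ba (Ta t) (Ts t) / gam_a)).
      + intros t Ht. apply hode_a. lra.
      + destruct (const_sign (fun r => Fa lam q sigB epsa ba (Ta r) (Ts r) / gam_a) 1 CA) as [P|P].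
        * intros t Ht. apply (Nz t). lra.
        * left. intros t Ht. apply Rlt_le, P, Ht.
        * right. intros t Ht. apply Rlt_le, P, Ht.
    - apply (mono_of_sign Ts (fun t => Fs lam q sigB epsa bs (Ta t) (Ts t) / gam_s)).
      + intros t Ht. apply hode_s. lra.
      + destruct (const_sign (fun r => Fs lam q sigB epsa bs (Ta r) (Ts r) / gam_s) 1 CS) as [P|P].
        * intros t Ht. apply (Nz t). lra.
        * left. intros t Ht. apply Rlt_le, P, Ht.
        * right. intros t Ht. apply Rlt_le, P, Ht. }
  destruct Mono as [T [HT [MA MS]]].
  destruct (mono_lim Ta T Rb MA) as [a [Ha Hab]].
  { intros t Ht. apply Bd. lra. }
  destruct (mono_lim Ts T Rb MS) as [s [Hs Hsb]].
  { intros t Ht. apply Bd. lra. }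
  split.
  - exists a, s. split; [split|split; auto].
    + assert (Z : Fa lam q sigB epsa ba a s / gam_a = 0).
      { apply (lim_deriv_zero Ta (fun t => Fa lam q sigB epsa ba (Ta t) (Ts t) / gam_a) a); auto.
        apply (lim_comp (Fa lam q sigB epsa ba) Ta Ts a s Kl gam_a); auto.
        intros r Hr. destruct (Bd r Hr). apply LipA; auto. }
      unfold Rdiv in Z. apply Rmult_integral in Z. destruct Z as [Z|Z]; auto.
      exfalso. apply (Rinv_neq_0_compat gam_a); lra.
    + assert (Z : Fs lam q sigB epsa bs a s / gam_s = 0).
      { apply (lim_deriv_zero Ts (fun t => Fs lam q sigB epsa bs (Ta t) (Ts t) / gam_s) s); auto.
        apply (lim_comp (Fs lam q sigB epsa bs) Ta Ts a s Kl gam_s); auto.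
        intros r Hr. destruct (Bd r Hr). apply LipS; auto. }
      unfold Rdiv in Z. apply Rmult_integral in Z. destruct Z as [Z|Z]; auto.
      exfalso. apply (Rinv_neq_0_compat gam_s); lra.
  - exists T. split; [lra|auto].
Qed.
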